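(* Let $\Gamma=(V,E,\psi)$ be a multigraph. Then $\Gamma$ is a $G$-graph with loops (i.e. $\Gamma\cong\Psi(G,S)$ for some group $G$ and some multiset $S$ of elements of $G$) if and only if there exist a subgroup $H$ of $Aut(\Gamma)$ and a clique with loops $C\subseteq V$ such that: (1) $C$ intersects every orbit of the action of $H$ on $V$; (2) for every $u\in C$, the stabilizer $Stab_H u$ is cyclic; (3) for every $u\in C$ and every orbit $O$ of the action of $H$ on $V$, $Stab_H u$ acts regularly on the set of edges incident to $u$ whose other end-point lies in $O$ (loops at $u$ count as edges with other end-point $u$).
   Context: A multigraph is a triple $(V,E,\psi)$ where $\psi$ assigns to each edge an unordered pair of not necessarily distinct vertices (loops and parallel edges allowed). A graph homomorphism/isomorphism is a pair $(f,f^\#)$ of maps on vertices and on edges compatible with $\psi$; $Aut(\Gamma)$ is the group of automorphisms, acting on both $V$ and $E$. An action is regular on a set $X$ if for all $x,y\in X$ there is exactly one group element sending $x$ to $y$. A clique with loops is a set of vertices any two distinct of which are adjacent and each of which carries at least one loop. For a group $G$ (identity $e$) and a multiset $S$ of elements of $G$, the $G$-graph $\Phi(G,S)$ is the multigraph whose vertex set is the union over the members $s$ of $S$ (counted with multiplicity; an element occurring several times contributes a separate copy of its cosets per occurrence) of the levels $V_s=\{\langle s\rangle x : x\in G\}$ of right cosets of $\langle s\rangle$, and which has, for vertices $\langle s\rangle x\in V_s$ and $\langle t\rangle y\in V_t$ with $s,t$ distinct members of $S$, one edge between them labeled $g$ for each $g\in\langle s\rangle x\cap\langle t\rangle y$,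 and no other edges. The $G$-graph with loops $\Psi(G,S)$ is obtained from $\Phi(G,S)$ by adding, at each vertex $\langle s\rangle x$ and for each $g\in\langle s\rangle x$, a loop labeled $g$. A multigraph is a $G$-graph with loops if it is isomorphic (ignoring labels) to some $\Psi(G,S)$. *)

(* Defs.v *)
From HB Require Import structures.
From mathcomp Require Import all_boot all_fingroup all_solvable.
Set Implicit Arguments. Unset Strict Implicit. Unset Printing Implicit Defensive.
Import GroupScope.
Local Open Scope group_scope.

(* A (finite) multigraph (V, E, psi): psi e = (a, b) encodes the UNORDERED
   pair {a, b}; only [ends psi e] = [set a; b] is ever used, so the order of
   the two components is irrelevant (a loop has a = b).                    *)
Definition ends (V E : finType) (psi : E -> V * V) (e : E) : {set V} :=
  [set (psi e).1; (psi e).2].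

Definition mg_iso (V1 E1 V2 E2 : finType)
  (psi1 : E1 -> V1 * V1) (psi2 : E2 -> V2 * V2) : Prop :=
  exists (f : V1 -> V2) (fe : E1 -> E2),
    [/\ bijective f, bijective fe &
        forall e, ends psi2 (fe e) = f @: ends psi1 e].

Definition mg_Aut (V E : finType) (psi : E -> V * V) : {set {perm V} * {perm E}} :=
  [set p : {perm V} * {perm E} | [forall e, ends psi (p.2 e) == p.1 @: ends psi e]].

(* ---------- The G-graph with loops Psi(G, S) ----------
   S : seq gT is the multiset; its members are indexed by 'I_(size S),
   so an element occurring several times gives several levels.            *)
Section GGraph.
Variables (gT : finGroupType) (S : seq gT).

Definition sS (i : 'I_(size S)) : gT := nth 1 S i.

(* vertices: (i, <s_i> x), i.e. the disjoint union of the levels V_{s_i} *)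
Definition is_gvert (p : 'I_(size S) * {set gT}) : bool :=
  p.2 \in rcosets <[sS p.1]> [set: gT].
Definition gvert := {p : 'I_(size S) * {set gT} | is_gvert p}.

Lemma gvert_proof (i : 'I_(size S)) (g : gT) : is_gvert (i, <[sS i]> :* g).
Proof. by apply/rcosetsP; exists g; rewrite ?inE. Qed.

Definition mkvert (i : 'I_(size S)) (g : gT) : gvert :=
  exist _ (i, <[sS i]> :* g) (gvert_proof i g).

(* edges: (i, j, g) with i <= j.  For i < j this is the edge labeled g between
   <s_i> g and <s_j> g (one per g in the intersection of the two cosets);
   for i = j it is the loop labeled g at <s_i> g.                          *)
Definition gedge := {t : 'I_(size S) * 'I_(size S) * gT | t.1.1 <= t.1.2}.

Definition gpsi (e : gedge) : gvert * gvert :=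
  (mkvert (val e).1.1 (val e).2, mkvert (val e).1.2 (val e).2).

End GGraph.

Definition is_GgraphL (V E : finType) (psi : E -> V * V) : Prop :=
  exists (gT : finGroupType) (S : seq gT), mg_iso psi (@gpsi gT S).

Definition clique_loops (V E : finType) (psi : E -> V * V) (C : {set V}) : Prop :=
  (forall u v, u \in C -> v \in C -> u != v -> exists e, ends psi e = [set u; v])
  /\ (forall u, u \in C -> exists e, ends psi e = [set u]).

Definition vorbit (V E : finType) (H : {set {perm V} * {perm E}}) (v : V) : {set V} :=
  [set (h.1 : {perm V}) v | h : {perm V} * {perm E} in H].

Definition vstab (V E : finType) (H : {set {perm V} * {perm E}}) (u : V)
  : {set {perm V} * {perm E}} := [set h in H | h.1 u == u].

Definition other_end (V E : finType) (psi : E -> V * V) (u : V) (e : E) : V :=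
  if (psi e).1 == u then (psi e).2 else (psi e).1.

Definition inc_edges (V E : finType) (psi : E -> V * V) (u : V) (O : {set V})
  : {set E} := [set e | (u \in ends psi e) && (other_end psi u e \in O)].

Definition regular_on_edges (V E : finType) (K : {set {perm V} * {perm E}})
  (X : {set E}) : Prop :=
  forall x y, x \in X -> y \in X -> exists! h, h \in K /\ h.2 x = y.

(* Main.v *)
Require Import Defs.
From mathcomp Require Import all_boot all_fingroup all_solvable.
Import GroupScope.
Set Implicit Arguments. Unset Strict Implicit. Unset Printing Implicit Defensive.


Definition goodHC (V E : finType) (psi : E -> V * V)
  (H : {group {perm V} * {perm E}}) (C : {set V}) :=
    [/\ H \subset mg_Aut psi,
        clique_loops psi C,
        (forall v : V, exists2 c, c \in C & c \in vorbit H v),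
        (forall u, u \in C -> cyclic (vstab H u)) &
        (forall u w, u \in C ->
           regular_on_edges (vstab H u) (inc_edges psi u (vorbit H w)))].

Section Ends.
Variables (V E : finType) (psi : E -> V * V).

Lemma ends_other u e : u \in ends psi e -> ends psi e = [set u; other_end psi u e].
Proof.
rewrite /ends /other_end; case: (psi e) => a b /=; rewrite !inE.
case: (a =P u) => [->|na] //= H.
have ub : u = b by case/orP: H => /eqP // ua; case: na.
by rewrite -ub setUC.
Qed.

Lemma set2_inj (u a b : V) : [set u; a] = [set u; b] -> a = b.
Proof.
move=> Hs; have: a \in [set u; b] by rewrite -Hs !inE eqxx orbT.
rewrite !inE => /orP[/eqP au|/eqP //]; subst a.
have: b \in [set u; u] by rewrite Hs !inE eqxx orbT.
by rewrite !inE orbb => /eqP ->.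
Qed.

Lemma other_end_eq u e o : ends psi e = [set u; o] -> other_end psi u e = o.
Proof.
move=> He; have ue : u \in ends psi e by rewrite He !inE eqxx.
by apply: (@set2_inj u); rewrite -ends_other.
Qed.

Lemma in_ends_other u e : u \in ends psi e -> other_end psi u e \in ends psi e.
Proof. by move=> ue; rewrite (ends_other ue) !inE eqxx orbT. Qed.

End Ends.


Section Transport.
Variables (V1 E1 V2 E2 : finType) (psi1 : E1 -> V1 * V1) (psi2 : E2 -> V2 * V2).
Variables (f : V1 -> V2) (g : V2 -> V1) (fe : E1 -> E2) (ge : E2 -> E1).
Hypotheses (fK : cancel f g) (gK : cancel g f) (feK : cancel fe ge) (geK : cancel ge fe).
Hypothesis fends : forall e, ends psi2 (fe e) = f @: ends psi1 e.

Lemma gends t : ends psi1 (ge t) = g @: ends psi2 t.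
Proof.
by rewrite -{2}(geK t) fends -imset_comp (eq_imset _ fK) imset_id.
Qed.

Lemma cv_inj (p : {perm V2}) : injective (fun v => g (p (f v))).
Proof. move=> x y H; apply: (can_inj fK); apply: (perm_inj (s:=p)); exact: (can_inj gK H). Qed.
Lemma ce_inj (p : {perm E2}) : injective (fun v => ge (p (fe v))).
Proof. move=> x y H; apply: (can_inj feK); apply: (perm_inj (s:=p)); exact: (can_inj geK H). Qed.

Definition cmap (x : {perm V2} * {perm E2}) : {perm V1} * {perm E1} :=
  (perm (@cv_inj x.1), perm (@ce_inj x.2)).

Lemma cmap1 x v : (cmap x).1 v = g (x.1 (f v)).
Proof. by rewrite permE. Qed.
Lemma cmap2 x e : (cmap x).2 e = ge (x.2 (fe e)).
Proof. by rewrite permE. Qed.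

Lemma cmapM : {in setT &, {morph cmap : x y / x * y}}.
Proof.
move=> x y _ _; rewrite /cmap /=; congr pair; apply/permP => v.
  by rewrite permM !permE /= gK.
by rewrite /= permM !permE /= geK.
Qed.

Definition cmorph := Morphism cmapM.

Lemma transport :
  (exists (H : {group {perm V2} * {perm E2}}) C, goodHC psi2 H C) ->
  exists (H : {group {perm V1} * {perm E1}}) C, goodHC psi1 H C.
Proof.
case=> H [C [sHA [Ccl Cloop] Corb Ccyc Creg]].
exists (cmorph @* H)%G, (g @: C).
have inH x : x \in H -> cmap x \in cmorph @* H.
  by move=> xH; apply: (mem_morphim cmorph (in_setT x) xH).
have outH y : y \in cmorph @* H -> exists2 x, x \in H & y = cmap x.
  by case/morphimP=> x _ xH ->; exists x.
have orbE v x : x \in H -> (cmap x).1 v \in vorbit (cmorph @* H) v.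
  by move=> xH; apply/imsetP; exists (cmap x); rewrite ?inH.
have stabE a : vstab (cmorph @* H) (g a) = cmorph @* vstab H a.
  apply/setP => y; apply/idP/idP.
    rewrite inE => /andP[/outH[x xH ->]]; rewrite cmap1 gK => /eqP /(can_inj gK) xa.
    by apply: (mem_morphim cmorph (in_setT x)); rewrite inE xH xa eqxx.
  case/morphimP=> x _; rewrite inE => /andP[xH /eqP xa] ->.
  by rewrite inE inH //= cmap1 gK xa.
split.
- apply/subsetP => y /outH[x xH ->]; rewrite inE; apply/forallP => e.
  have := subsetP sHA x xH; rewrite inE => /forallP /(_ (fe e)) /eqP Ax.
  by rewrite cmap2 gends Ax fends -!imset_comp; apply/eqP/eq_imset => v /=; rewrite cmap1.
- split.
    move=> u v /imsetP[a aC ->] /imsetP[b bC ->] ab.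
    have ab' : a != b by apply: contraNneq ab => ->.
    case: (Ccl a b aC bC ab') => e He; exists (ge e).
    by rewrite gends He imsetU1 imset_set1.
  move=> u /imsetP[a aC ->]; case: (Cloop a aC) => e He; exists (ge e).
  by rewrite gends He imset_set1.
- move=> v; case: (Corb (f v)) => c cC /imsetP[x xH cE].
  exists (g c); first by rewrite imset_f.
  by rewrite cE; have := orbE v x xH; rewrite cmap1.
- move=> u /imsetP[a aC ->]; rewrite stabE.
  case/cyclicP: (Ccyc a aC) => x ->.
  by rewrite morphim_cycle ?in_setT // cycle_cyclic.
- move=> u w /imsetP[a aC ->]; rewrite stabE => x y.
  have incE z : z \in inc_edges psi1 (g a) (vorbit (cmorph @* H) w) ->
      fe z \in inc_edges psi2 a (vorbit H (f w)).
    rewrite inE => /andP[az].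
    have Hz := ends_other az.
    have Hz2 : ends psi2 (fe z) = [set a; f (other_end psi1 (g a) z)].
      by rewrite fends Hz imsetU1 imset_set1 gK.
    rewrite inE (other_end_eq Hz2) Hz2 !inE eqxx /=.
    case/imsetP=> y' /outH[h hH ->] ->; rewrite cmap1 gK.
    by apply/imsetP; exists h.
  move=> /incE xi /incE yi.
  case: (Creg a (f w) aC _ _ xi yi) => h [[hS hxy] hU].
  exists (cmap h); split.
    split; first by apply: (mem_morphim cmorph (in_setT h)).
    by rewrite cmap2 hxy feK.
  move=> k [/morphimP[h' _ h'S ->]] hk.
  congr cmap; apply: hU; split => //.
  by have := hk; rewrite /= cmap2 => <-; rewrite geK.
Qed.

End Transport.


Section PsiGood.
Variables (gT : finGroupType) (S : seq gT).
Local Notation V := (gvert S).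
Local Notation E := (gedge S).
Local Notation s := (@sS gT S).

Lemma gvertP (v : V) : exists x, v = mkvert (val v).1 x.
Proof.
case: v => [[i A] /= Av]; case/rcosetsP: (Av) => x _ Ax.
by exists x; apply: val_inj; move: Ax => /= ->.
Qed.

Lemma vact_proof g (v : V) : is_gvert ((val v).1, (val v).2 :* g).
Proof.
have [x vE] := gvertP v; rewrite {1 2}vE /= -rcosetM; exact: gvert_proof.
Qed.

Definition vact g (v : V) : V := exist (@is_gvert gT S) _ (vact_proof g v).

Lemma vactE g i x : vact g (mkvert i x) = mkvert i (x * g).
Proof. by apply: val_inj; rewrite /= rcosetM. Qed.

Lemma vact_inj g : injective (vact g).
Proof.
move=> [[a A] ?] [[b B] ?] /(congr1 val) /= [e1 e2]; apply: val_inj => /=.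
move: e2 => /(congr1 (fun A => A :* g^-1)); rewrite !rcosetK => e2.
by rewrite e1 e2.
Qed.

Definition eact g (t : E) : E := exist (fun t : ('I_(size S) * 'I_(size S) * gT) => t.1.1 <= t.1.2)%N ((val t).1, (val t).2 * g) (valP t).

Lemma eact_inj g : injective (eact g).
Proof.
move=> [[a x] ?] [[b y] ?] /(congr1 val) /= [e1 /mulIg e2]; apply: val_inj => /=.
by rewrite e1 e2.
Qed.

Definition pmap g : {perm V} * {perm E} := (perm (@vact_inj g), perm (@eact_inj g)).

Lemma pmap1 g v : (pmap g).1 v = vact g v. Proof. by rewrite permE. Qed.
Lemma pmap2 g t : (pmap g).2 t = eact g t. Proof. by rewrite permE. Qed.

Lemma pmapM : {in setT &, {morph pmap : x y / x * y}}.
Proof.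
move=> x y _ _; rewrite /pmap /=; congr pair; apply/permP => v.
  rewrite permM !permE; apply: val_inj; by rewrite /= rcosetM.
rewrite /= permM !permE; apply: val_inj; by rewrite /= mulgA.
Qed.

Definition pmorph := Morphism pmapM.
Definition HP := (pmorph @* setT)%G.
Definition CP := [set mkvert i 1 | i : 'I_(size S)].

Lemma HP_P y : y \in HP -> exists g, y = pmap g.
Proof. by case/morphimP=> g _ _ ->; exists g. Qed.
Lemma HP_in g : pmap g \in HP.
Proof. exact: (mem_morphim pmorph (in_setT g) (in_setT g)). Qed.

Lemma endsP (t : E) : ends (@gpsi gT S) t =
   [set mkvert (val t).1.1 (val t).2; mkvert (val t).1.2 (val t).2].
Proof. by []. Qed.

Lemma mkvert1E i g : (mkvert i g == mkvert i 1) = (g \in <[s i]>).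
Proof.
rewrite -val_eqE /= xpair_eqE eqxx /= rcoset1.
apply/eqP/idP => [<-|gs]; first exact: rcoset_refl.
exact: rcoset_id.
Qed.

Lemma orb_idx w y : y \in vorbit HP w -> (val y).1 = (val w).1.
Proof. by case/imsetP=> h /HP_P[g ->] ->; rewrite pmap1. Qed.

Lemma inc_info i w (t : E) : t \in inc_edges (@gpsi gT S) (mkvert i 1) (vorbit HP w) ->
  (val t).2 \in <[s i]> /\ ((val t).1 = (i, (val w).1) \/ (val t).1 = ((val w).1, i)).
Proof.
case: t => [[[a b] x] /= ab]; rewrite inE => /andP[].
rewrite /other_end endsP /=.
case: ifP => [/eqP ea|/negbT nea].
  move=> _ /orb_idx /= bw.
  have ai : a = i by have := congr1 (fun v => (val v).1) ea.
  subst a; split; first by rewrite -mkvert1E ea.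
  by left; rewrite bw.
rewrite !inE => /orP[/eqP ea|/eqP eb]; first by rewrite ea eqxx in nea.
move=> /orb_idx /= aw.
have bi : b = i by have := congr1 (fun v => (val v).1) eb.
subst b; split; first by rewrite -mkvert1E -eb.
by right; rewrite aw.
Qed.

Lemma PsiGood : goodHC (@gpsi gT S) HP CP.
Proof.
split.
- apply/subsetP => y /HP_P[g ->]; rewrite inE; apply/forallP => t.
  rewrite pmap2 !endsP imsetU1 imset_set1 !pmap1 !vactE //.
- split.
    move=> u v /imsetP[i _ ->] /imsetP[j _ ->] ij.
    case: (leqP i j) => [le|lt].
      by exists (exist _ ((i, j), 1) le).
    exists (exist _ ((j, i), 1) (ltnW lt)); exact: setUC.
  move=> u /imsetP[i _ ->]; exists (exist _ ((i, i), 1) (leqnn i)).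
  by rewrite endsP /= setUid.
- move=> v; case: (gvertP v) => x vE; exists (mkvert (val v).1 1).
    exact: imset_f.
  apply/imsetP; exists (pmap x^-1); first exact: HP_in.
  by rewrite pmap1 {2}vE vactE mulgV.
- move=> u /imsetP[i _ ->].
  have -> : vstab HP (mkvert i 1) = pmorph @* <[s i]>.
    apply/setP => y; apply/idP/idP.
      rewrite inE => /andP[/HP_P[g ->]]; rewrite pmap1 vactE mul1g mkvert1E => gs.
      exact: (mem_morphim pmorph (in_setT g) gs).
    case/morphimP=> g _ gs ->; rewrite inE HP_in /= pmap1 vactE mul1g mkvert1E //.
  by rewrite morphim_cycle ?in_setT // cycle_cyclic.
- move=> u w /imsetP[i _ ->] x y xi yi.
  case: (inc_info xi) => xs xe; case: (inc_info yi) => ys ye.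
  have e1 : (val x).1 = (val y).1.
    have anti (p q : 'I_(size S)) : (p <= q)%N -> (q <= p)%N -> p = q.
      by move=> pq qp; apply: val_inj; apply/eqP; rewrite eqn_leq pq qp.
    have hx : ((val x).1.1 <= (val x).1.2)%N := valP x.
    have hy : ((val y).1.1 <= (val y).1.2)%N := valP y.
    move: hx hy; case: xe => ->; case: ye => -> //= h1 h2; by rewrite (anti _ _ h1 h2).
  exists (pmap ((val x).2^-1 * (val y).2)); split.
    split; last first.
      by rewrite pmap2; apply: val_inj; rewrite /= e1 mulKVg -surjective_pairing.
    rewrite inE HP_in /= pmap1 vactE mul1g mkvert1E.
    by rewrite groupM ?groupV.
  move=> k [/setIdP[/HP_P[g ->] _]]; rewrite pmap2 => /(congr1 (fun t => (val t).2)) /= <-.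
  by rewrite mulKg.
Qed.

End PsiGood.


Lemma bij_of_inj_surj (A B : finType) (F : A -> B) :
  injective F -> (forall y, exists x, F x == y) -> bijective F.
Proof.
move=> Finj Fsurj; exists (fun y => xchoose (Fsurj y)).
  by move=> x; apply: Finj; apply/eqP; exact: (xchooseP (Fsurj (F x))).
by move=> y; apply/eqP; exact: (xchooseP (Fsurj y)).
Qed.

Lemma pair_sorted n (a b c d : 'I_n) : (a <= b)%N -> (c <= d)%N ->
  [set a; b] = [set c; d] -> a = c /\ b = d.
Proof.
move=> ab cd Es.
have anti (x y : 'I_n) : (x <= y)%N -> (y <= x)%N -> x = y.
  by move=> h1 h2; apply: val_inj; apply/eqP; rewrite eqn_leq h1 h2.
have ha : a \in [set c; d] by rewrite -Es !inE eqxx.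
have hb : b \in [set c; d] by rewrite -Es !inE eqxx orbT.
have hc : c \in [set a; b] by rewrite Es !inE eqxx.
have hd : d \in [set a; b] by rewrite Es !inE eqxx orbT.
move: ha hb hc hd; rewrite !inE.
case/orP=> /eqP ha; case/orP=> /eqP hb; case/orP=> /eqP hc; case/orP=> /eqP hd;
  subst => //; try (by split; apply: anti; rewrite ?(leq_trans ab) ?(leq_trans cd)).
Qed.

Section Conv.
Variables (V E : finType) (psi : E -> V * V) (H : {group {perm V} * {perm E}}) (C : {set V}).
Hypothesis good : goodHC psi H C.

Lemma autE h e : h \in H -> ends psi (h.2 e) = h.1 @: ends psi e.
Proof.
case: good => sHA _ _ _ _ hH.
by have := subsetP sHA h hH; rewrite inE => /forallP /(_ e) /eqP.
Qed.

Lemma orb_act h v : h \in H -> h.1 v \in vorbit H v.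
Proof. by move=> hH; apply/imsetP; exists h. Qed.

Lemma orb_refl v : v \in vorbit H v.
Proof. by have := orb_act v (group1 H); rewrite perm1. Qed.

Lemma orb_sym v w : w \in vorbit H v -> v \in vorbit H w.
Proof.
case/imsetP=> h hH ->; have := orb_act (h.1 v) (groupVr hH).
by rewrite /= -permM mulgV perm1.
Qed.

Lemma orb_trans v w x : w \in vorbit H v -> x \in vorbit H w -> x \in vorbit H v.
Proof.
case/imsetP=> h hH -> /imsetP[k kH ->]; have := orb_act v (groupM hH kH).
by rewrite /= permM.
Qed.

Lemma C_uniq u v : u \in C -> v \in C -> v \in vorbit H u -> u = v.
Proof.
case: good => _ [Ccl Cloop] _ _ Creg uC vC vo; apply/eqP; apply/negPn/negP => uv.
case: (Cloop u uC) => l hl; case: (Ccl u v uC vC uv) => e he.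
have hl2 : ends psi l = [set u; u] by rewrite setUid.
have li : l \in inc_edges psi u (vorbit H u).
  by rewrite inE hl !inE eqxx /= (other_end_eq hl2) orb_refl.
have ei : e \in inc_edges psi u (vorbit H u).
  by rewrite inE he !inE eqxx /= (other_end_eq he).
case: (Creg u u uC l e li ei) => h [[/setIdP[hH /eqP hu] hle] _].
have := autE l hH; rewrite hle he hl imset_set1 hu => Es.
have : v \in [set u] by rewrite -Es !inE eqxx orbT.
by rewrite inE eq_sym (negbTE uv).
Qed.

Definition gen u : {perm V} * {perm E} := odflt 1 [pick x | vstab H u == <[x]>].

Lemma genP u : u \in C -> vstab H u = <[gen u]>.
Proof.
case: good => _ _ _ Ccyc _ uC; rewrite /gen.
case: pickP => [x /eqP //|none].
by case/cyclicP: (Ccyc u uC) => x hx; have := none x; rewrite hx eqxx.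
Qed.

Lemma genH u : u \in C -> gen u \in H.
Proof. by move=> uC; have := cycle_id (gen u); rewrite -genP // => /setIdP[]. Qed.

Local Notation gT := (subg_of H).

Definition SS : seq gT := [seq subg H (gen (enum_val k)) | k <- enum 'I_#|C|].
Lemma Hsz : size SS = #|C|.
Proof. by rewrite size_map size_enum_ord. Qed.

Definition uu (i : 'I_(size SS)) : V := enum_val (cast_ord Hsz i).

Lemma uuC i : uu i \in C.
Proof. exact: enum_valP. Qed.

Lemma uu_inj : injective uu.
Proof. by move=> i j /enum_val_inj /cast_ord_inj. Qed.

Lemma uu_surj c : c \in C -> exists i, uu i = c.
Proof.
move=> cC; exists (cast_ord (esym Hsz) (enum_rank_in cC c)).
by rewrite /uu cast_ordKV enum_rankK_in.
Qed.

Lemma sSE i : @sS _ SS i = subg H (gen (uu i)).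
Proof.
rewrite /sS /SS (nth_map (cast_ord Hsz i)); last by rewrite size_enum_ord (leq_trans (ltn_ord i)) ?Hsz.
have -> : (i : nat) = cast_ord Hsz i by [].
by rewrite nth_ord_enum.
Qed.

Lemma memS i (y : gT) : (y \in <[@sS _ SS i]>) = ((sgval y).1 (uu i) == uu i).
Proof.
have gH := genH (uuC i).
have -> : ((sgval y).1 (uu i) == uu i) = (sgval y \in vstab H (uu i)).
  by rewrite inE subgP.
rewrite genP ?uuC // sSE; apply/cycleP/cycleP => [[k ->]|[k yk]].
  by exists k; rewrite morphX ?in_setT //= subgK.
by exists k; apply: subg_inj; rewrite yk morphX ?in_setT //= subgK.
Qed.


Lemma ed_ex i j : exists e, ends psi e == [set uu i; uu j].
Proof.
case: good => _ [Ccl Cloop] _ _ _.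
case: (eqVneq i j) => [<-|ij].
  by case: (Cloop _ (uuC i)) => e he; exists e; rewrite he setUid.
have uij : uu i != uu j by rewrite (inj_eq uu_inj).
by case: (Ccl _ _ (uuC i) (uuC j) uij) => e he; exists e; rewrite he.
Qed.

Definition ed i j : E := xchoose (ed_ex i j).
Lemma edE i j : ends psi (ed i j) = [set uu i; uu j].
Proof. exact/eqP/(xchooseP (ed_ex i j)). Qed.

Lemma ed_inc i j : ed i j \in inc_edges psi (uu i) (vorbit H (uu j)).
Proof. by rewrite inE edE !inE eqxx /= (other_end_eq (edE i j)) orb_refl. Qed.

Definition FV (v : gvert SS) : V := (sgval (repr (val v).2)).1 (uu (val v).1).
Definition FE (t : gedge SS) : E := (sgval (val t).2).2 (ed (val t).1.1 (val t).1.2).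

Lemma FVmk i x : FV (mkvert i x) = (sgval x).1 (uu i).
Proof.
rewrite /FV /=; have := mem_repr_rcoset [group of <[@sS _ SS i]>] x.
case/rcosetP => z zs ->; have := zs; rewrite memS => /eqP zu.
by rewrite /= permM zu.
Qed.

Lemma FE_ends t : ends psi (FE t) = FV @: ends (@gpsi _ SS) t.
Proof.
rewrite /FE autE ?subgP // edE endsP !imsetU1 !imset_set1 !FVmk //.
Qed.


Lemma gvertP' (v : gvert SS) : exists i x, v = mkvert i x.
Proof. by case: (gvertP v) => x vE; exists (val v).1, x. Qed.

Lemma sgvalMV (x y : gT) : sgval (x * y^-1) = sgval x * (sgval y)^-1.
Proof. by []. Qed.

Lemma fix_of_eq a (x y : gT) : (sgval x).1 (uu a) = (sgval y).1 (uu a) ->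
  (sgval (x * y^-1)).1 (uu a) = uu a.
Proof. by move=> exy; rewrite sgvalMV /= permM exy -permM mulgV perm1. Qed.

Lemma FV_inj : injective FV.
Proof.
move=> v w; have [i [x ->]] := gvertP' v; have [j [y ->]] := gvertP' w.
rewrite !FVmk => exy.
have ji : uu j \in vorbit H (uu i).
  apply/imsetP; exists (sgval (x * y^-1)); first exact: subgP.
  by rewrite sgvalMV /= permM exy -permM mulgV perm1.
have ij : i = j by apply: uu_inj; apply: C_uniq ji; apply: uuC.
subst j; have := fix_of_eq exy; move/eqP; rewrite -memS => xy.
apply: val_inj => /=; congr pair.
by apply/(rcoset_eqP (G := [group of <[@sS _ SS i]>])); rewrite mem_rcoset.
Qed.


Lemma FV_surj v : exists w, FV w == v.
Proof.
case: good => _ _ Corb _ _.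
case: (Corb v) => c cC /imsetP[h hH ce]; case: (uu_surj cC) => i ui.
exists (mkvert i (subg H h^-1)); rewrite FVmk subgK ?groupV // ui ce /=.
by rewrite permK.
Qed.

Lemma FE_inj : injective FE.
Proof.
case: good => _ _ _ _ Creg.
move=> [[[a b] x] ab] [[[c d] y] cd] /= eFE.
have eE := congr1 (ends psi) eFE; rewrite !FE_ends in eE.
move/imset_inj: eE => /(_ FV_inj); rewrite !endsP /= => eE.
have eI := congr1 (fun A : {set gvert SS} => [set (val v).1 | v in A]) eE; rewrite /= !imsetU1 !imset_set1 /= in eI.
case: (pair_sorted ab cd eI); rewrite /= => ac bd; subst c d.
have axy : mkvert a x = mkvert a y.
  have : mkvert a x \in [set mkvert a y; mkvert b y] by rewrite -eE !inE eqxx.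
  rewrite !inE => /orP[/eqP //|/eqP e1].
  have ba : b = a by have := congr1 (fun v => (val v).1) e1.
  by rewrite e1 ba.
have kfix : (sgval x).1 (uu a) = (sgval y).1 (uu a) by rewrite -!FVmk axy.
move: eFE; rewrite /FE /= => eFE.
have k2 : (sgval (x * y^-1)).2 (ed a b) = ed a b.
  by rewrite sgvalMV /= permM eFE -permM mulgV perm1.
have kS : sgval (x * y^-1) \in vstab H (uu a).
  by rewrite inE subgP /= (fix_of_eq kfix).
case: (Creg (uu a) (uu b) (uuC a) _ _ (ed_inc a b) (ed_inc a b)) => h [_ hU].
have k1 : sgval (x * y^-1) = 1.
  rewrite -(hU _ (conj kS k2)); apply: hU; split; first by rewrite inE group1 /= perm1.
  by rewrite /= perm1.
have xy : x = y.
  have : x * y^-1 = 1 by apply: subg_inj; rewrite k1.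
  by move/(congr1 (mulg^~ y)); rewrite mulgKV mul1g.
by subst y; congr exist; apply: bool_irrelevance.
Qed.


Lemma FE_surj e : exists t, FE t == e.
Proof.
case: good => _ _ Corb _ Creg.
have pe : (psi e).1 \in ends psi e by rewrite !inE eqxx.
case: (Corb (psi e).1) => c cC /imsetP[h hH ce]; case: (uu_surj cC) => a ua.
set e1 := h.2 e.
have ae1 : uu a \in ends psi e1 by rewrite /e1 autE // ua ce imset_f.
set o := other_end psi (uu a) e1.
case: (Corb o) => c' c'C co; case: (uu_surj c'C) => b ub.
have e1i : e1 \in inc_edges psi (uu a) (vorbit H (uu b)).
  by rewrite inE ae1 /= -/o orb_sym // ub.
have [a1 [b1 [le Eab]]] : exists a1 b1 : 'I_(size SS), (a1 <= b1)%N /\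
    [set uu a1; uu b1] = [set uu a; uu b].
  case: (leqP a b) => [ab|ba]; first by exists a, b.
  by exists b, a; split; [exact: ltnW | exact: setUC].
have edi : ed a1 b1 \in inc_edges psi (uu a) (vorbit H (uu b)).
  have Ee : ends psi (ed a1 b1) = [set uu a; uu b] by rewrite edE.
  by rewrite inE Ee !inE eqxx /= (other_end_eq Ee) orb_refl.
case: (Creg (uu a) (uu b) (uuC a) _ _ edi e1i) => k [[/setIdP[kH _] ke] _].
have khH : k * h^-1 \in H by rewrite groupM ?groupV.
exists (exist (fun t : 'I_(size SS) * 'I_(size SS) * gT => t.1.1 <= t.1.2)%N
               ((a1, b1), subg H (k * h^-1)) le).
by rewrite /FE /= subgK //= permM ke /e1 permK.
Qed.

End Conv.

Lemma iso_from (V1 E1 V2 E2 : finType) (psi1 : E1 -> V1 * V1) (psi2 : E2 -> V2 * V2)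
  (F : V2 -> V1) (FE : E2 -> E1) : bijective F -> bijective FE ->
  (forall t, ends psi1 (FE t) = F @: ends psi2 t) -> mg_iso psi1 psi2.
Proof.
case=> g Fg gF [ge FEg geF] hE; exists g, ge; split.
- by exists F.
- by exists FE.
- move=> e; rewrite -{2}(geF e) hE -imset_comp (eq_imset _ Fg) imset_id //.
Qed.

Theorem theorem1 (V E : finType) (psi : E -> V * V) :
  is_GgraphL psi <->
  exists (H : {group {perm V} * {perm E}}) (C : {set V}),
    [/\ H \subset mg_Aut psi,
        clique_loops psi C,
        (forall v : V, exists2 c, c \in C & c \in vorbit H v),
        (forall u, u \in C -> cyclic (vstab H u)) &
        (forall u w, u \in C ->
           regular_on_edges (vstab H u) (inc_edges psi u (vorbit H w)))].
Proof.
split.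
- case=> gT [S [f [fe [[g fK gK] [ge feK geK] fends]]]].
  apply: (transport fK gK feK geK fends).
  by exists (HP S), (CP S); apply: PsiGood.
- case=> H [C good]; exists (subg_of H), (@SS _ _ H C).
  apply: (iso_from (F := @FV _ _ H C) (FE := @FE _ _ psi H C good)).
  + apply: bij_of_inj_surj; [exact: FV_inj good | exact: FV_surj good].
  + apply: bij_of_inj_surj; [exact: FE_inj | exact: FE_surj].
  + exact: FE_ends.
Qed.
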